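(* Consider an arbitrary finite configuration of cities in general position in the $L\times L$ square, and let $\mathcal{G}_L$ be the network defined in the context. Suppose $\mathcal{G}_L$ is not connected. Then for any city $v_0$ there exist $m\ge0$ and distinct cities $v_0,v_1,\dots,v_m$ such that (i) $d(v_0,v_1)>d(v_1,v_2)>\dots>d(v_{m-1},v_m)$; (ii) if $m=0$ then every city within distance $\Delta(v_0)$ of $v_0$ is in the same component of $\mathcal{G}_L$ as $v_0$; (iii) if $m\ge1$ then $\Delta(v_m)<d(v_0,v_1)$.
   Context: The relative neighborhood graph (RNG) on a set of cities in $\mathbb{R}^2$ joins $x,y$ iff the lune $A_{x,y}$ (intersection of the discs of radius $d(x,y)$ centred at $x$ and at $y$, $d$ Euclidean distance) contains no other city. $\mathcal{G}_L$ is the graph on the cities in the $L\times L$ square whose edges are the pairs of these cities that are edges of the RNG for this configuration together with every locally finite configuration of cities outside the square. Components are connected components of $\mathcal{G}_L$. $\Delta(v)$ is the Euclidean distance from $v$ to the boundary of the $L\times L$ square. *)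

(* Defs.v *)
From Stdlib Require Import Reals List Relations.
Import ListNotations.
Open Scope R_scope.

Definition Point : Type := (R * R)%type.

Definition edist (p q : Point) : R :=
  sqrt ((fst p - fst q) ^ 2 + (snd p - snd q) ^ 2).

Definition in_square (L : R) (p : Point) : Prop :=
  0 <= fst p <= L /\ 0 <= snd p <= L.

Definition bdist (L : R) (p : Point) : R :=
  Rmin (Rmin (fst p) (L - fst p)) (Rmin (snd p) (L - snd p)).

Definition in_lune (x y z : Point) : Prop :=
  edist x z < edist x y /\ edist y z < edist x y.

Definition locally_finite (T : Point -> Prop) : Prop :=
  forall r : R, exists l : list Point,
    forall p, T p -> edist (0, 0) p <= r -> In p l.

(* edge of G_L: {x,y} is an RNG edge of S ∪ T for every locally finite
   configuration T of cities outside the square *)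
Definition GL_edge (L : R) (S : list Point) (x y : Point) : Prop :=
  In x S /\ In y S /\ x <> y /\
  forall T : Point -> Prop,
    locally_finite T ->
    (forall p, T p -> ~ in_square L p) ->
    forall z, (In z S \/ T z) -> z <> x -> z <> y -> ~ in_lune x y z.

Definition same_component (L : R) (S : list Point) (u v : Point) : Prop :=
  clos_refl_trans Point (GL_edge L S) u v.

Definition GL_connected (L : R) (S : list Point) : Prop :=
  forall u v, In u S -> In v S -> same_component L S u v.

Definition general_position (S : list Point) : Prop :=
  forall a b c d, In a S -> In b S -> In c S -> In d S ->
    a <> b -> c <> d -> edist a b = edist c d ->
    (a = c /\ b = d) \/ (a = d /\ b = c).

(* Main.v *)
Require Import Defs.
From Stdlib Require Import Reals List Relations.
From Stdlib Require Import Lra Lia Classical.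
Import ListNotations.
Open Scope R_scope.

Lemma edist_sym p q : edist p q = edist q p.
Proof. unfold edist. f_equal. ring. Qed.

Lemma edist_nonneg p q : 0 <= edist p q.
Proof. unfold edist. apply sqrt_pos. Qed.

Lemma edist_refl p : edist p p = 0.
Proof. unfold edist. replace ((fst p - fst p) ^ 2 + (snd p - snd p) ^ 2) with 0 by ring.
  apply sqrt_0. Qed.

Lemma coord_le a b : 0 <= a -> a <= sqrt (a ^ 2 + b ^ 2).
Proof. intros Ha. rewrite <- (sqrt_pow2 a Ha) at 1. apply sqrt_le_1_alt.
  pose proof (pow2_ge_0 b). lra. Qed.

Lemma bdist_le L y z : in_square L y -> ~ in_square L z -> bdist L y <= edist y z.
Proof.
  intros [[H1 H2] [H3 H4]] Hz. unfold bdist, edist.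
  assert (Hx : 0 <= (fst y - fst z) ^ 2) by apply pow2_ge_0.
  assert (Hy : 0 <= (snd y - snd z) ^ 2) by apply pow2_ge_0.
  unfold in_square in Hz.
  destruct (Rlt_or_le (fst z) 0) as [h|h].
  { eapply Rle_trans; [apply Rmin_l|]. eapply Rle_trans; [apply Rmin_l|].
    eapply Rle_trans; [|apply coord_le; lra]. lra. }
  destruct (Rlt_or_le L (fst z)) as [h'|h'].
  { eapply Rle_trans; [apply Rmin_l|]. eapply Rle_trans; [apply Rmin_r|].
    replace ((fst y - fst z) ^ 2) with ((fst z - fst y) ^ 2) by ring.
    eapply Rle_trans; [|apply coord_le; lra]. lra. }
  destruct (Rlt_or_le (snd z) 0) as [g|g].
  { eapply Rle_trans; [apply Rmin_r|]. eapply Rle_trans; [apply Rmin_l|].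
    rewrite Rplus_comm.
    eapply Rle_trans; [|apply coord_le; lra]. lra. }
  destruct (Rlt_or_le L (snd z)) as [g'|g'].
  { eapply Rle_trans; [apply Rmin_r|]. eapply Rle_trans; [apply Rmin_r|].
    rewrite Rplus_comm.
    replace ((snd y - snd z) ^ 2) with ((snd z - snd y) ^ 2) by ring.
    eapply Rle_trans; [|apply coord_le; lra]. lra. }
  exfalso; apply Hz; split; split; lra.
Qed.

Lemma bdist_nonneg L y : in_square L y -> 0 <= bdist L y.
Proof.
  intros [[H1 H2] [H3 H4]]. unfold bdist.
  repeat apply Rmin_glb; lra.
Qed.

Section S.
Variables (L : R) (S : list Point).
Hypothesis Hsq : forall p, In p S -> in_square L p.

Fixpoint chainP (b : R) (x : Point) (l : list Point) : Prop :=
  match l with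
  | [] => bdist L x < b
  | y :: l' => In y S /\ edist x y < b /\ chainP (edist x y) y l'
  end.

Lemma chainP_pos b x l : In x S -> chainP b x l -> 0 < b.
Proof.
  intros Hx. destruct l; simpl.
  - pose proof (bdist_nonneg L x (Hsq x Hx)). lra.
  - intros [_ [H _]]. pose proof (edist_nonneg x p). lra.
Qed.

Lemma chainP_mono b b' x l : b <= b' -> chainP b x l -> chainP b' x l.
Proof. destruct l; simpl; intros; try lra. destruct H0 as [? [? ?]]; repeat split; auto; lra. Qed.

Lemma chainP_suffix l2 : forall b y x l3, chainP b y (l2 ++ x :: l3) ->
  exists c, c <= b /\ chainP c x l3.
Proof.
  induction l2 as [|u l2 IH]; intros b y x l3 H; simpl in H.
  - destruct H as [_ [H1 H2]]. exists (edist y x). split; auto; lra.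
  - destruct H as [_ [H1 H2]]. destruct (IH _ _ _ _ H2) as [c [Hc Hc']].
    exists c; split; auto; lra.
Qed.

Lemma chainP_inS : forall l b x, chainP b x l -> forall u, In u l -> In u S.
Proof.
  induction l as [|y l IH]; simpl; intros b x H u Hu; [contradiction|].
  destruct H as [Hy [_ H]]. destruct Hu as [<-|Hu]; auto. eapply IH; eauto.
Qed.

Lemma chainP_erase : forall l b x, In x S -> chainP b x l ->
  exists l', chainP b x l' /\ NoDup (x :: l').
Proof.
  induction l as [|y l0 IH]; intros b x Hx H.
  - exists []. split; auto. constructor; [simpl; auto|constructor].
  - simpl in H. destruct H as [Hy [Hxy H]].
    destruct (IH _ _ Hy H) as [l1 [H1 H2]].
    destruct (classic (In x (y :: l1))) as [Hin|Hin].
    + simpl in Hin. destruct Hin as [<-|Hin].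
      * pose proof (chainP_pos _ _ _ Hy H1). rewrite edist_refl in H0. lra.
      * destruct (in_split _ _ Hin) as [l2 [l3 ->]].
        destruct (chainP_suffix _ _ _ _ _ H1) as [c [Hc Hc']].
        exists l3. split.
        -- eapply chainP_mono; [|exact Hc']. lra.
        -- apply NoDup_cons_iff in H2. destruct H2 as [_ H2].
           apply NoDup_app_remove_l in H2. exact H2.
    + exists (y :: l1). split.
      * simpl. auto.
      * constructor; auto.
Qed.

Lemma chainP_dec : forall l b x i, chainP b x l -> (i + 2 < length (x :: l))%nat ->
  forall d, edist (nth i (x :: l) d) (nth (i + 1) (x :: l) d) >
    edist (nth (i + 1) (x :: l) d) (nth (i + 2) (x :: l) d).
Proof.
  induction l as [|y l IH]; intros b x i H Hi d; simpl in Hi; [lia|].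
  simpl in H. destruct H as [Hy [Hxy H]].
  destruct i as [|i].
  - destruct l as [|z l]; simpl in Hi; [lia|]. simpl. simpl in H. lra.
  - simpl. apply (IH _ _ i H). simpl. lia.
Qed.

Lemma chainP_last : forall l b x d, chainP b x l -> bdist L (last (x :: l) d) < b.
Proof.
  induction l as [|y l IH]; intros b x d H; simpl in H; [simpl; auto|].
  destruct H as [_ [Hxy H]]. specialize (IH _ _ d H).
  change (last (x :: y :: l) d) with (last (y :: l) d). lra.
Qed.

Lemma GL_edge_sym x y : GL_edge L S x y -> GL_edge L S y x.
Proof.
  intros [Hx [Hy [Hne H]]]. repeat split; auto.
  intros T HT Hout z Hz Hzy Hzx [H1 H2]. apply (H T HT Hout z Hz Hzx Hzy).
  rewrite (edist_sym y x) in *. split; auto.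
Qed.

Lemma sc_sym x y : same_component L S x y -> same_component L S y x.
Proof.
  unfold same_component. induction 1.
  - apply rt_step. apply GL_edge_sym; auto.
  - apply rt_refl.
  - eapply rt_trans; eauto.
Qed.

Definition cnt (r : R) : nat :=
  length (filter (fun p => if Rlt_dec (edist (fst p) (snd p)) r then true else false)
    (list_prod S S)).

Lemma filter_le {A} (f g : A -> bool) l : (forall p, f p = true -> g p = true) ->
  (length (filter f l) <= length (filter g l))%nat.
Proof.
  intros Hfg. induction l as [|a l IH]; simpl; auto.
  destruct (f a) eqn:E1; [rewrite (Hfg a E1); simpl; lia|].
  destruct (g a); simpl; lia.
Qed.

Lemma filter_lt {A} (f g : A -> bool) l q : (forall p, f p = true -> g p = true) ->
  In q l -> f q = false -> g q = true ->
  (length (filter f l) < length (filter g l))%nat.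
Proof.
  intros Hfg. induction l as [|a l IH]; simpl; [tauto|].
  intros [<-|Hq] Hf Hg.
  - rewrite Hf, Hg. simpl. pose proof (filter_le f g l Hfg). lia.
  - specialize (IH Hq Hf Hg).
    destruct (f a) eqn:E1; [rewrite (Hfg a E1); simpl; lia|].
    destruct (g a); simpl; lia.
Qed.

Lemma cnt_lt a b r : In a S -> In b S -> edist a b < r -> (cnt (edist a b) < cnt r)%nat.
Proof.
  intros Ha Hb Hr. unfold cnt. apply filter_lt with (q := (a, b)).
  - intros p. destruct (Rlt_dec _ (edist a b)); destruct (Rlt_dec _ r); auto; lra.
  - apply in_prod; auto.
  - simpl. destruct (Rlt_dec _ _); auto; lra.
  - simpl. destruct (Rlt_dec _ _); auto; lra.
Qed.

Lemma claim : forall n x y, (cnt (edist x y) < n)%nat -> In x S -> In y S ->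
  ~ same_component L S x y ->
  exists y' l, In y' S /\ edist x y' <= edist x y /\ chainP (edist x y') y' l.
Proof.
  induction n as [|n IH]; intros x y Hn Hx Hy Hnc; [lia|].
  assert (Hne : x <> y) by (intros ->; apply Hnc; apply rt_refl).
  assert (Hex : exists z, (In z S /\ z <> x /\ z <> y /\ in_lune x y z) \/
                          (~ in_square L z /\ in_lune x y z)).
  { apply NNPP; intro Hn'. apply Hnc. apply rt_step. repeat split; auto.
    intros T HT Hout z Hz Hzx Hzy Hl. apply Hn'. exists z.
    destruct Hz as [Hz|Hz]; [left; auto | right; split; auto]. }
  destruct Hex as [z [[Hz [Hzx [Hzy [Hl1 Hl2]]]] | [Hout [Hl1 Hl2]]]].
  - destruct (classic (same_component L S x z)) as [Hxz|Hxz].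
    + assert (Hyz : ~ same_component L S y z).
      { intro Hyz. apply Hnc. eapply rt_trans; [exact Hxz|]. apply sc_sym; auto. }
      assert (Hc : (cnt (edist y z) < n)%nat).
      { pose proof (cnt_lt y z (edist x y) Hy Hz ltac:(lra)). lia. }
      destruct (IH _ _ Hc Hy Hz Hyz) as [y'' [l [Hy'' [Hd Hch]]]].
      exists y, (y'' :: l). split; auto. split; [lra|]. simpl. repeat split; auto. lra.
    + assert (Hc : (cnt (edist x z) < n)%nat).
      { pose proof (cnt_lt x z (edist x y) Hx Hz ltac:(lra)). lia. }
      destruct (IH _ _ Hc Hx Hz Hxz) as [y' [l [Hy' [Hd Hch]]]].
      exists y', l. repeat split; auto. lra.
  - exists y, []. repeat split; auto; try lra. simpl.
    pose proof (bdist_le L y z (Hsq y Hy) Hout). lra.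
Qed.

End S.

Theorem lemma4 (L : R) (S : list Point)
  (HL : 0 < L) (Hnd : NoDup S) (Hsq : forall p, In p S -> in_square L p)
  (Hgp : general_position S) (Hnc : ~ GL_connected L S)
  (v0 : Point) (Hv0 : In v0 S) :
  exists vs : list Point,
    hd_error vs = Some v0 /\ NoDup vs /\ (forall v, In v vs -> In v S) /\
    (forall i : nat, (i + 2 < length vs)%nat ->
       edist (nth i vs v0) (nth (i + 1) vs v0) >
       edist (nth (i + 1) vs v0) (nth (i + 2) vs v0)) /\
    (length vs = 1%nat ->
       forall w, In w S -> edist v0 w <= bdist L v0 -> same_component L S v0 w) /\
    ((2 <= length vs)%nat -> bdist L (last vs v0) < edist v0 (nth 1 vs v0)).
Proof.
  destruct (classic (forall w, In w S -> edist v0 w <= bdist L v0 -> same_component L S v0 w))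
    as [Hall|Hall].
  - exists [v0]. repeat split; auto.
    + constructor; [simpl; auto|constructor].
    + intros v [<-|[]]; auto.
    + intros i Hi; simpl in Hi; lia.
    + intros H; simpl in H; lia.
  - assert (Hw : exists w, In w S /\ edist v0 w <= bdist L v0 /\ ~ same_component L S v0 w).
    { apply NNPP; intro Hn. apply Hall. intros w Hw Hd. apply NNPP; intro Hs.
      apply Hn. exists w; auto. }
    destruct Hw as [w [Hw [Hd Hs]]].
    destruct (claim L S Hsq (Datatypes.S (cnt S (edist v0 w))) v0 w ltac:(lia) Hv0 Hw Hs)
      as [y' [l [Hy' [Hd' Hch]]]].
    assert (Hfin : forall y1 rest, In y1 S -> NoDup (v0 :: y1 :: rest) ->
       chainP L S (edist v0 y1) y1 rest ->
       exists vs : list Point,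
    hd_error vs = Some v0 /\ NoDup vs /\ (forall v, In v vs -> In v S) /\
    (forall i : nat, (i + 2 < length vs)%nat ->
       edist (nth i vs v0) (nth (i + 1) vs v0) >
       edist (nth (i + 1) vs v0) (nth (i + 2) vs v0)) /\
    (length vs = 1%nat ->
       forall w, In w S -> edist v0 w <= bdist L v0 -> same_component L S v0 w) /\
    ((2 <= length vs)%nat -> bdist L (last vs v0) < edist v0 (nth 1 vs v0))).
    { intros y1 rest Hy1 Hnd' Hc. exists (v0 :: y1 :: rest).
      assert (Hc' : chainP L S (edist v0 y1 + 1) v0 (y1 :: rest)).
      { simpl. repeat split; auto; lra. }
      split; [reflexivity|]. split; [auto|]. split; [|split; [|split]].
      - intros v [<-|[<-|Hv]]; [exact Hv0|exact Hy1|]. exact (chainP_inS L S _ _ _ Hc v Hv).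
      - intros i Hi. apply (chainP_dec L S _ _ _ i Hc' Hi).
      - intros H; simpl in H; lia.
      - intros _. simpl nth. change (last (v0 :: y1 :: rest) v0) with (last (y1 :: rest) v0).
        apply (chainP_last L S _ _ _ _ Hc). }
    destruct (chainP_erase L S Hsq _ _ _ Hy' Hch) as [l1 [H1 H2]].
    destruct (classic (In v0 (y' :: l1))) as [Hin|Hin].
    + simpl in Hin. destruct Hin as [<-|Hin].
      * pose proof (chainP_pos L S Hsq _ _ _ Hy' H1). rewrite edist_refl in H. lra.
      * destruct (in_split _ _ Hin) as [l2 [l3 ->]].
        destruct (chainP_suffix L S _ _ _ _ _ H1) as [c [Hc Hc']].
        assert (Hnd3 : NoDup (v0 :: l3)).
        { apply NoDup_cons_iff in H2. destruct H2 as [_ H2].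
          apply NoDup_app_remove_l in H2. exact H2. }
        destruct l3 as [|y1 rest].
        -- simpl in Hc'. lra.
        -- simpl in Hc'. destruct Hc' as [Hy1 [_ Hc'']]. apply (Hfin y1 rest); auto.
    + apply (Hfin y' l1); auto. constructor; auto.
Qed.
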